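(* Let $F_t$, $t\in[0,1]$, be a one-parameter family on a complete metric space $(\mathbb X,d)$ satisfying (H1) and (H2), and suppose $f_{(i_*,1)}$ is an isometry for some $i_*\in\{1,\dots,N\}$. (a) If an upper transition attractor $A^\bullet$ exists, then $f_{(i_*,1)}(A^\bullet)=A^\bullet$. (b) If moreover (H3) holds and the lower transition attractor $A_\bullet$ exists and is compact, then $f_{(i_*,1)}(A_\bullet)=A_\bullet$.
   Context: Let $(\mathbb X,d)$ be a complete metric space. A one-parameter family is $F_t=\{f_{(1,t)},\dots,f_{(N,t)}\}$, $t\in[0,1]$, $N\ge2$, of continuous self-maps of $\mathbb X$. $\mathrm{Lip}(f,d)=\sup_{x\ne y}d(f(x),f(y))/d(x,y)$ and $\mathrm{Lip}(F_t,d)=\max_i\mathrm{Lip}(f_{(i,t)},d)$. Conditions: (H1) for every $x\in\mathbb X$ and every $i$, the map $t\mapsto f_{(i,t)}(x)$ is continuous on $[0,1]$; (H2) $\mathrm{Lip}(F_t,d)<1$ for all $t\in[0,1)$; (H3) for each $i$ the limit $q_i=\lim_{t\to1^-}q_{i,t}$ exists, where $q_{i,t}$ is the unique fixed point of $f_{(i,t)}$ for $t\in[0,1)$; $Q=\{q_1,\dots,q_N\}$. For an IFS $F$ and $S\subseteq\mathbb X$, $F(S)=\overline{\bigcup_{f\in F}f(S)}$. For $t\in[0,1)$, $A_t$ is the attractor of $F_t$, the unique nonempty compact set with $F_t(A_t)=A_t$. With $h$ the Hausdorff metric, an upper transition attractor is a compact set $A^\bullet$ for which there is an increasing sequence $t_n\in[0,1)$,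 $t_n\to1$, with $h(A_{t_n},A^\bullet)\to0$. The lower transition attractor is the smallest (w.r.t. inclusion) set $A_\bullet$ with $F_1(A_\bullet)=A_\bullet$ and $Q\subseteq A_\bullet$. *)

(* Defs.v *)
From Stdlib Require Import Reals Lra List.
Open Scope R_scope.

Section Metric.
Context {X : Type} (d : X -> X -> R).

Definition is_metric : Prop :=
  (forall x y, 0 <= d x y) /\
  (forall x y, d x y = 0 <-> x = y) /\
  (forall x y, d x y = d y x) /\
  (forall x y z, d x z <= d x y + d y z).

Definition seq_converges (u : nat -> X) (l : X) : Prop :=
  forall eps, 0 < eps -> exists n0, forall n, (n0 <= n)%nat -> d (u n) l < eps.

Definition cauchy (u : nat -> X) : Prop :=
  forall eps, 0 < eps -> exists n0, forall n m,
    (n0 <= n)%nat -> (n0 <= m)%nat -> d (u n) (u m) < eps.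

Definition complete_metric : Prop :=
  forall u, cauchy u -> exists l, seq_converges u l.

Definition mcontinuous (f : X -> X) : Prop :=
  forall x eps, 0 < eps -> exists delta, 0 < delta /\
    forall y, d x y < delta -> d (f x) (f y) < eps.

Definition open_set (U : X -> Prop) : Prop :=
  forall x, U x -> exists r, 0 < r /\ forall y, d x y < r -> U y.

Definition compact_set (K : X -> Prop) : Prop :=
  forall (I : Type) (U : I -> X -> Prop),
    (forall i, open_set (U i)) ->
    (forall x, K x -> exists i, U i x) ->
    exists l : list I, forall x, K x -> exists i, In i l /\ U i x.

Definition closure (S : X -> Prop) : X -> Prop :=
  fun x => forall eps, 0 < eps -> exists y, S y /\ d x y < eps.

Definition set_eq (A B : X -> Prop) : Prop := forall x, A x <-> B x.
Definition subset (A B : X -> Prop) : Prop := forall x, A x -> B x.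

Definition image (f : X -> X) (S : X -> Prop) : X -> Prop :=
  fun y => exists x, S x /\ y = f x.

Definition hutch (N : nat) (g : nat -> X -> X) (S : X -> Prop) : X -> Prop :=
  closure (fun y => exists i, (i < N)%nat /\ image (g i) S y).

Definition lip_lt1 (g : X -> X) : Prop :=
  exists c, 0 <= c < 1 /\ forall x y, d (g x) (g y) <= c * d x y.

Definition isometry (g : X -> X) : Prop :=
  forall x y, d (g x) (g y) = d x y.

Definition is_attractor (N : nat) (g : nat -> X -> X) (A : X -> Prop) : Prop :=
  (exists x, A x) /\ compact_set A /\ set_eq (hutch N g A) A.

(** h(A_n, B) -> 0 for the Hausdorff metric h induced by d
    (between nonempty compact sets): for every eps > 0, eventually every
    point of A_n is eps-close to B and every point of B is eps-close to A_n *)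
Definition hausdorff_cvg (An : nat -> X -> Prop) (B : X -> Prop) : Prop :=
  forall eps, 0 < eps -> exists n0, forall n, (n0 <= n)%nat ->
    (forall x, An n x -> exists y, B y /\ d x y < eps) /\
    (forall y, B y -> exists x, An n x /\ d x y < eps).

End Metric.

(** The family: f i t is f_(i,t); A t is the attractor A_t. *)

Definition upper_transition_attractor {X : Type} (d : X -> X -> R)
    (A : R -> X -> Prop) (Aup : X -> Prop) : Prop :=
  compact_set d Aup /\
  exists tn : nat -> R,
    (forall n, 0 <= tn n < 1) /\
    (forall n, tn n < tn (S n)) /\
    Un_cv tn 1 /\
    hausdorff_cvg d (fun n => A (tn n)) Aup.

Definition lower_transition_attractor {X : Type} (d : X -> X -> R) (N : nat)
    (f : nat -> R -> X -> X) (Q : nat -> X) (Alow : X -> Prop) : Prop :=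
  set_eq (hutch d N (fun i => f i 1) Alow) Alow /\
  (forall i, (i < N)%nat -> Alow (Q i)) /\
  (forall B : X -> Prop,
     set_eq (hutch d N (fun i => f i 1) B) B ->
     (forall i, (i < N)%nat -> B (Q i)) ->
     subset Alow B).

(* Main.v *)
Require Import Defs.
From Stdlib Require Import Reals Lra Lia List Classical Arith.
Open Scope R_scope.

Section Aux.
Context {X : Type} (d : X -> X -> R) (Hd : is_metric d).

Lemma sep_lemma (K : X -> Prop) (g : X -> X) (y : X) :
  compact_set d K -> (forall z w, d (g z) (g w) <= d z w) ->
  (forall z, K z -> g z <> y) ->
  exists e, 0 < e /\ forall z, K z -> e <= d (g z) y.
Proof.
  destruct Hd as [Hpos [Hz [Hs Ht]]].
  intros HK Hg Hne.
  destruct (HK nat (fun k z => / INR (S k) < d (g z) y)) as [l Hl].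
  - intros k z Hkz. exists (d (g z) y - / INR (S k)). split; [lra|].
    intros w Hw. pose proof (Ht (g z) (g w) y). pose proof (Hg z w).
    lra.
  - intros z Kz. assert (0 < d (g z) y).
    { destruct (Hpos (g z) y) as [H|H]; auto. exfalso. apply (Hne z Kz).
      apply Hz; auto. }
    destruct (archimed_cor1 _ H) as [M [HM1 HM2]].
    exists (pred M). replace (S (pred M)) with M by lia. auto.
  - exists (/ INR (S (list_max l))). split.
    + apply Rinv_0_lt_compat. apply lt_0_INR. lia.
    + intros z Kz. destruct (Hl z Kz) as [k [Hk1 Hk2]].
      assert (k <= list_max l)%nat.
      { pose proof (proj1 (list_max_le l (list_max l)) (le_n _)) as HF.
        rewrite Forall_forall in HF. auto. }
      assert (/ INR (S (list_max l)) <= / INR (S k)).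
      { apply Rinv_le_contravar. apply lt_0_INR; lia. apply le_INR; lia. }
      lra.
Qed.

Lemma compact_closed (K : X -> Prop) (y : X) :
  compact_set d K -> closure d K y -> K y.
Proof.
  intros HK Hc. apply NNPP; intro Hn.
  destruct (sep_lemma K (fun z => z) y HK) as [e [He H]].
  - intros; lra.
  - intros z Kz E; subst; auto.
  - destruct (Hc e He) as [z [Kz Hz]]. specialize (H z Kz).
    destruct Hd as [_ [_ [Hs _]]]. rewrite Hs in Hz. lra.
Qed.

Lemma pigeon (e : R) (l : list X) : forall (u : nat -> X),
  (forall n m, n <> m -> e <= d (u n) (u m)) ->
  (forall n, exists z, In z l /\ d z (u n) < e / 2) -> False.
Proof.
  destruct Hd as [Hpos [Hz [Hs Ht]]].
  induction l as [|z l IH]; intros u Hsep Hcov.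
  - destruct (Hcov O) as [z [[] _]].
  - destruct (classic (exists n, d z (u n) < e / 2)) as [[n Hn]|Hno].
    + set (idx := fun k => if Nat.ltb k n then k else S k).
      assert (Hidx : forall k, idx k <> n).
      { intro k. unfold idx. destruct (Nat.ltb_spec k n); lia. }
      assert (Hinj : forall k m, k <> m -> idx k <> idx m).
      { intros k m. unfold idx. destruct (Nat.ltb_spec k n);
        destruct (Nat.ltb_spec m n); lia. }
      apply (IH (fun k => u (idx k))).
      * intros k m H. apply Hsep. auto.
      * intro k. destruct (Hcov (idx k)) as [w [[E|Hw] Hd']].
        -- subst w. exfalso. pose proof (Hsep _ _ (Hidx k)).
           pose proof (Ht (u (idx k)) z (u n)). rewrite (Hs (u (idx k)) z) in H0. lra.
        -- eauto.
    + apply (IH u Hsep). intro n. destruct (Hcov n) as [w [[E|Hw] Hd']].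
      * subst. exfalso. eauto.
      * eauto.
Qed.

Lemma iter_iso (g : X -> X) : isometry d g ->
  forall n a b, d (Nat.iter n g a) (Nat.iter n g b) = d a b.
Proof. intros Hi n; induction n; intros; simpl; auto. rewrite Hi; auto. Qed.

Lemma iter_add' (g : X -> X) : forall n k a,
  Nat.iter (n + k) g a = Nat.iter n g (Nat.iter k g a).
Proof. induction n; intros; simpl; auto. rewrite IHn; auto. Qed.

Lemma iso_surj (K : X -> Prop) (g : X -> X) :
  compact_set d K -> isometry d g -> (forall z, K z -> K (g z)) ->
  forall y, K y -> exists z, K z /\ y = g z.
Proof.
  intros HK Hi Hst y Ky. apply NNPP; intro Hn.
  destruct (sep_lemma K g y HK) as [e [He Hsep]].
  - intros; rewrite Hi; lra.
  - intros z Kz E. apply Hn. eauto.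
  - set (u := fun n => Nat.iter n g y).
    assert (Ku : forall n, K (u n)).
    { intro n; unfold u; induction n; simpl; auto. }
    destruct Hd as [Hpos [Hz [Hs Ht]]].
    assert (Hlt : forall n k, e <= d (u n) (u (n + S k)%nat)).
    { intros n k. unfold u. rewrite iter_add'.
      rewrite (iter_iso g Hi). rewrite Hs. simpl. apply Hsep. apply Ku. }
    destruct (HK X (fun z w => d z w < e / 2)) as [l Hl].
    + intros z w Hw. exists (e / 2 - d z w). split; [lra|].
      intros v Hv. pose proof (Ht z w v). lra.
    + intros x Kx. exists x. assert (d x x = 0) by (apply Hz; auto). lra.
    + apply (pigeon e l u).
      * intros n m Hnm. destruct (Nat.lt_total n m) as [H|[H|H]]; [|lia|].
        -- replace m with (n + S (m - n - 1))%nat by lia. apply Hlt.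
        -- rewrite Hs. replace n with (m + S (n - m - 1))%nat by lia. apply Hlt.
      * intro n. destruct (Hl (u n) (Ku n)) as [z [Hz1 Hz2]]. eauto.
Qed.

End Aux.

Theorem mainTheorem9
  (X : Type) (d : X -> X -> R) (N : nat) (f : nat -> R -> X -> X)
  (A : R -> X -> Prop) (istar : nat)
  (Hd : is_metric d) (Hcomp : complete_metric d) (HN : (2 <= N)%nat)
  (Hcont : forall i t, (i < N)%nat -> 0 <= t <= 1 -> mcontinuous d (f i t))
  (* (H1) *)
  (H1 : forall i x, (i < N)%nat -> forall t, 0 <= t <= 1 ->
          forall eps, 0 < eps -> exists delta, 0 < delta /\
            forall s, 0 <= s <= 1 -> Rabs (s - t) < delta ->
              d (f i s x) (f i t x) < eps)
  (* (H2) *)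
  (H2 : forall t, 0 <= t < 1 -> forall i, (i < N)%nat -> lip_lt1 d (f i t))
  (* A t is the attractor A_t of F_t for t in [0,1) *)
  (HA : forall t, 0 <= t < 1 -> is_attractor d N (fun i => f i t) (A t))
  (Histar : (istar < N)%nat)
  (Hiso : isometry d (f istar 1)) :
  (* (a) *)
  (forall Aup : X -> Prop, upper_transition_attractor d A Aup ->
     set_eq (image (f istar 1) Aup) Aup) /\
  (* (b) *)
  (forall (q : nat -> R -> X) (Q : nat -> X),
     (forall i t, (i < N)%nat -> 0 <= t < 1 -> f i t (q i t) = q i t) ->
     (* (H3) *)
     (forall i, (i < N)%nat -> forall eps, 0 < eps -> exists delta, 0 < delta /\
        forall t, 1 - delta < t < 1 -> d (q i t) (Q i) < eps) ->
     forall Alow : X -> Prop,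
       lower_transition_attractor d N f Q Alow ->
       compact_set d Alow ->
       set_eq (image (f istar 1) Alow) Alow).
Proof.
  assert (Hfin : forall K, compact_set d K -> (forall z, K z -> K (f istar 1 z)) ->
            set_eq (image (f istar 1) K) K).
  { intros K HK Hst x. split.
    - intros [z [Kz E]]. subst. auto.
    - intro Kx. destruct (iso_surj d Hd K _ HK Hiso Hst x Kx) as [z [Kz E]].
      exists z; auto. }
  pose proof Hd as [Hpos [Hz [Hs Ht]]].
  split.
  - intros Aup [HK [tn [Htn1 [Htn2 [Htn3 Hh]]]]]. apply Hfin; auto.
    intros x Ax. apply (compact_closed d Hd _ _ HK).
    intros eps Heps.
    destruct (H1 istar x Histar 1 ltac:(lra) (eps/3) ltac:(lra)) as [del [Hdel Hdf]].
    destruct (Htn3 del Hdel) as [n0 Hn0].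
    destruct (Hh (eps/3) ltac:(lra)) as [n1 Hn1].
    set (n := Nat.max n0 n1).
    destruct (Hn1 n ltac:(lia)) as [Hh1 Hh2].
    destruct (Hh2 x Ax) as [x' [Ax' Hx']].
    assert (Hin : A (tn n) (f istar (tn n) x')).
    { destruct (HA (tn n) (Htn1 n)) as [_ [_ Heq]]. apply Heq.
      intros e He. exists (f istar (tn n) x'). split.
      - exists istar. split; auto. exists x'; auto.
      - assert (d (f istar (tn n) x') (f istar (tn n) x') = 0) by (apply Hz; auto). lra. }
    destruct (Hh1 _ Hin) as [y [Ay Hy]].
    exists y. split; auto.
    assert (H0 : d (f istar (tn n) x) (f istar 1 x) < eps / 3).
    { apply Hdf. pose proof (Htn1 n); lra. unfold R_dist in Hn0.
      apply Hn0; lia. }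
    destruct (H2 (tn n) (Htn1 n) istar Histar) as [c [Hc Hl]].
    pose proof (Hl x x'). pose proof (Hpos x x'). rewrite Hs in Hx'.
    assert (c * d x x' <= d x x') by nra.
    pose proof (Ht (f istar 1 x) (f istar (tn n) x) y).
    pose proof (Ht (f istar (tn n) x) (f istar (tn n) x') y).
    rewrite Hs in H0. lra.
  - intros q Q _ _ Alow [Heq _] HK. apply Hfin; auto.
    intros z Kz. apply Heq. intros e He. exists (f istar 1 z). split.
    + exists istar. split; auto. exists z; auto.
    + assert (d (f istar 1 z) (f istar 1 z) = 0) by (apply Hz; auto). lra.
Qed.
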